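(* A compact Hausdorff space $X$ belongs to the class $\mathcal A$ if and only if $X$ is scattered and hereditarily paracompact.
   Context: A topological space is scattered if each nonempty subspace has an isolated point. For a locally compact Hausdorff space $Y$, an Aleksandrov compactification of $Y$ is a compactification $\overline Y$ of $Y$ with $|\overline Y\setminus Y|\le 1$. The class $\mathcal A$ is the smallest class of compact spaces that contains the empty space and the one-point space and is closed under taking the Aleksandrov compactification of a topological sum $\bigoplus_{i\in I}K_i$ of any family $\{K_i\}_{i\in I}$ of spaces from $\mathcal A$. *)

(* Defs.v *)
From Stdlib Require Import List Classical FunctionalExtensionality PropExtensionality.
Import ListNotations.

Set Implicit Arguments.
Unset Strict Implicit.

Record space := Space {
  pt :> Type;
  open : (pt -> Prop) -> Prop;
  open_full : open (fun _ => True);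
  open_inter : forall U V, open U -> open V -> open (fun x => U x /\ V x);
  open_union : forall F : (pt -> Prop) -> Prop,
      (forall U, F U -> open U) -> open (fun x => exists U, F U /\ U x)
}.

Arguments open {s} _.

Definition sub_open (X : space) (S : X -> Prop) (V : {x | S x} -> Prop) : Prop :=
  exists U, open U /\ forall y : {x | S x}, V y <-> U (proj1_sig y).
Arguments sub_open {X} S V.

Lemma sub_open_full (X : space) (S : X -> Prop) : sub_open S (fun _ => True).
Proof. exists (fun _ => True); split; [apply open_full | tauto]. Qed.

Lemma sub_open_inter (X : space) (S : X -> Prop) U V :
  sub_open S U -> sub_open S V -> sub_open S (fun x => U x /\ V x).
Proof.
  intros [U' [HU EU]] [V' [HV EV]]. exists (fun x => U' x /\ V' x).
  split; [apply open_inter; auto|]. intro y; rewrite EU, EV; tauto.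
Qed.

Lemma sub_open_union (X : space) (S : X -> Prop) (F : ({x | S x} -> Prop) -> Prop) :
  (forall U, F U -> sub_open S U) -> sub_open S (fun x => exists U, F U /\ U x).
Proof.
  intros HF.
  exists (fun x => exists W, (open W /\ exists U, F U /\
              forall y : {x | S x}, U y <-> W (proj1_sig y)) /\ W x).
  split.
  - apply (@open_union _ (fun W => open W /\ exists U, F U /\
              forall y : {x | S x}, U y <-> W (proj1_sig y))). tauto.
  - intro y; split.
    + intros [U [FU Uy]]. destruct (HF U FU) as [W [HW EW]].
      exists W. split; [split; [auto | exists U; auto] | apply EW; auto].
    + intros [W [[HW [U [FU EU]]] Wy]]. exists U; split; auto. apply EU; auto.
Qed.

Definition subspace (X : space) (S : X -> Prop) : space :=
  @Space {x | S x} (sub_open S) (sub_open_full S) (@sub_open_inter X S)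
         (@sub_open_union X S).

Definition sum_open (I : Type) (K : I -> space) (V : {i : I & pt (K i)} -> Prop) : Prop :=
  forall i, open (fun x : K i => V (existT _ i x)).
Arguments sum_open {I} K V.

Lemma sum_open_full (I : Type) (K : I -> space) : sum_open K (fun _ => True).
Proof. intro i; apply open_full. Qed.

Lemma sum_open_inter (I : Type) (K : I -> space) U V :
  sum_open K U -> sum_open K V -> sum_open K (fun x => U x /\ V x).
Proof. intros HU HV i; apply open_inter; auto. Qed.

Lemma sum_open_union (I : Type) (K : I -> space) (F : ({i : I & pt (K i)} -> Prop) -> Prop) :
  (forall U, F U -> sum_open K U) -> sum_open K (fun x => exists U, F U /\ U x).
Proof.
  intros HF i.
  assert (E : (fun x : K i => exists U, F U /\ U (existT _ i x)) =
              (fun x => exists W, (exists U, F U /\ W = (fun y : K i => U (existT _ i y))) /\ W x)).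
  { apply functional_extensionality; intro x; apply propositional_extensionality; split.
    - intros [U [FU Ux]]. exists (fun y => U (existT _ i y)); split; eauto.
    - intros [W [[U [FU ->]] Wx]]. eauto. }
  simpl; rewrite E. apply open_union. intros W [U [FU ->]]. apply HF; auto.
Qed.

Definition sum_space (I : Type) (K : I -> space) : space :=
  @Space {i : I & pt (K i)} (sum_open K) (sum_open_full K) (@sum_open_inter I K)
         (@sum_open_union I K).

Definition hausdorff (X : space) : Prop :=
  forall x y : X, x <> y -> exists U V, open U /\ open V /\ U x /\ V y /\
    forall z, U z -> V z -> False.

Definition compact (X : space) : Prop :=
  forall (I : Type) (U : I -> X -> Prop), (forall i, open (U i)) ->
    (forall x, exists i, U i x) ->
    exists l : list I, forall x, exists i, In i l /\ U i x.

Definition isolated_in (X : space) (S : X -> Prop) (x : X) : Prop :=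
  S x /\ exists U, open U /\ U x /\ forall y, U y -> S y -> y = x.

Definition scattered (X : space) : Prop :=
  forall S : X -> Prop, (exists x, S x) -> exists x, isolated_in S x.

Definition locally_finite (X : space) (J : Type) (V : J -> X -> Prop) : Prop :=
  forall x : X, exists W, open W /\ W x /\ exists l : list J,
    forall j, (exists y, W y /\ V j y) -> In j l.

(** Paracompact: every open cover has a locally finite open refinement.
    (Hausdorffness is not built in.) *)
Definition paracompact (X : space) : Prop :=
  forall (I : Type) (U : I -> X -> Prop), (forall i, open (U i)) ->
    (forall x, exists i, U i x) ->
    exists (J : Type) (V : J -> X -> Prop),
      (forall j, open (V j)) /\ (forall x, exists j, V j x) /\
      (forall j, exists i, forall x, V j x -> U i x) /\
      locally_finite V.

Definition hereditarily_paracompact (X : space) : Prop :=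
  forall S : X -> Prop, paracompact (subspace S).

Definition embedding (Y Z : space) (e : Y -> Z) : Prop :=
  (forall y1 y2, e y1 = e y2 -> y1 = y2) /\
  (forall W, open W -> open (fun y => W (e y))) /\
  (forall V, open V -> exists W, open W /\ forall y, V y <-> W (e y)).

Definition aleksandrov_compactification (Y Z : space) (e : Y -> Z) : Prop :=
  compact Z /\ hausdorff Z /\ embedding e /\
  (forall W, open W -> (exists z, W z) -> exists y, W (e y)) /\
  (forall z1 z2 : Z, (forall y, e y <> z1) -> (forall y, e y <> z2) -> z1 = z2).

(** The class A (closed under homeomorphism, as a class of spaces). *)
Inductive classA : space -> Prop :=
| A_empty : forall X : space, (X -> False) -> classA X
| A_point : forall X : space, (exists x : X, forall y : X, y = x) -> classA X
| A_compactify : forall (I : Type) (K : I -> space) (Z : space)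
      (e : sum_space K -> Z),
    (forall i, classA (K i)) -> aleksandrov_compactification e -> classA Z.

(* Main.v *)
Require Import Defs.
From Stdlib Require Import List Classical FunctionalExtensionality PropExtensionality ProofIrrelevance ClassicalEpsilon Eqdep.
From Stdlib Require Import Relations Relation_Operators Operators_Properties Lia Arith.
Import ListNotations.

Section Basics.
Context {X : space}.

Lemma open_ext (U V : X -> Prop) : open U -> (forall x, U x <-> V x) -> open V.
Proof.
  intros HU H. assert (E : U = V).
  { apply functional_extensionality; intro x; apply propositional_extensionality; apply H. }
  subst; auto.
Qed.

Lemma open_Union (I : Type) (U : I -> X -> Prop) :
  (forall i, open (U i)) -> open (fun x => exists i, U i x).
Proof.
  intros H. apply open_ext with (fun x => exists W, (exists i, W = U i) /\ W x).
  - apply open_union. intros W [i ->]; auto.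
  - intro x; split.
    + intros [W [[i ->] Hx]]; eauto.
    + intros [i Hi]; exists (U i); eauto.
Qed.

Lemma open_empty : open (fun _ : X => False).
Proof.
  apply open_ext with (fun x => exists i : Empty_set, (fun _ _ => True) i x).
  - apply open_Union; intros [].
  - intro x; split; [intros [[] _] | tauto].
Qed.

Lemma open_or (U V : X -> Prop) : open U -> open V -> open (fun x => U x \/ V x).
Proof.
  intros HU HV. apply open_ext with (fun x => exists b : bool, (if b then U else V) x).
  - apply open_Union; intros []; auto.
  - intro x; split.
    + intros [[] H]; auto.
    + intros [H|H]; [exists true|exists false]; auto.
Qed.

Lemma open_nbhd (A : X -> Prop) :
  (forall x, A x -> exists V, open V /\ V x /\ forall y, V y -> A y) -> open A.
Proof.
  intros H. apply open_ext with (fun x => exists W, (open W /\ forall y, W y -> A y) /\ W x).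
  - apply open_union; tauto.
  - intro x; split.
    + intros [W [[_ HW] Wx]]; auto.
    + intros Ax. destruct (H x Ax) as [V [HV [Vx HVA]]]. exists V; auto.
Qed.

Lemma open_list_inter (T : Type) (l : list T) (G : T -> X -> Prop) :
  (forall t, In t l -> open (G t)) -> open (fun x => forall t, In t l -> G t x).
Proof.
  induction l as [|a l IH]; intros H.
  - apply open_ext with (fun _ => True); [apply open_full|]. intro x; simpl; tauto.
  - apply open_ext with (fun x => G a x /\ forall t, In t l -> G t x).
    + apply open_inter; [apply H; simpl; auto|apply IH; intros; apply H; simpl; auto].
    + intro x; simpl; split.
      * intros [Ha Hl] t [<-|Ht]; auto.
      * intros Hx; split; auto.
Qed.

Definition closed (F : X -> Prop) := open (fun x => ~ F x).
Definition clopen (F : X -> Prop) := open F /\ closed F.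

Lemma closed_ext (F G : X -> Prop) : closed F -> (forall x, F x <-> G x) -> closed G.
Proof. intros HF H. unfold closed. apply open_ext with (1 := HF). intro x; rewrite H; tauto. Qed.

Lemma closed_and (F G : X -> Prop) : closed F -> closed G -> closed (fun x => F x /\ G x).
Proof.
  intros HF HG. unfold closed. apply open_ext with (fun x => ~ F x \/ ~ G x).
  - apply open_or; auto.
  - intro x; tauto.
Qed.

Lemma closed_or (F G : X -> Prop) : closed F -> closed G -> closed (fun x => F x \/ G x).
Proof.
  intros HF HG. unfold closed. apply open_ext with (fun x => ~ F x /\ ~ G x).
  - apply open_inter; auto.
  - intro x; tauto.
Qed.

Lemma closed_empty : closed (fun _ => False).
Proof. unfold closed. apply open_ext with (fun _ => True); [apply open_full|tauto]. Qed.

Lemma closed_full : closed (fun _ => True).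
Proof. unfold closed. apply open_ext with (fun _ => False); [apply open_empty|tauto]. Qed.

Lemma closed_compl (U : X -> Prop) : open U -> closed (fun x => ~ U x).
Proof. intros H. unfold closed. apply open_ext with (1 := H). intro; tauto. Qed.

Lemma open_compl (F : X -> Prop) : closed F -> open (fun x => ~ F x).
Proof. auto. Qed.

Lemma open_diff (U F : X -> Prop) : open U -> closed F -> open (fun x => U x /\ ~ F x).
Proof. intros; apply open_inter; auto. Qed.

Lemma closed_diff (F U : X -> Prop) : closed F -> open U -> closed (fun x => F x /\ ~ U x).
Proof. intros; apply closed_and; auto. apply closed_compl; auto. Qed.

Lemma closed_Inter (I : Type) (F : I -> X -> Prop) :
  (forall i, closed (F i)) -> closed (fun x => forall i, F i x).
Proof.
  intros H. unfold closed. apply open_ext with (fun x => exists i, ~ F i x).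
  - apply open_Union; auto.
  - intro x; split.
    + intros [i Hi] Hx; auto.
    + intros Hx. apply not_all_ex_not; auto.
Qed.

Lemma closed_list_union (T : Type) (l : list T) (F : T -> X -> Prop) :
  (forall t, In t l -> closed (F t)) -> closed (fun x => exists t, In t l /\ F t x).
Proof.
  induction l as [|a l IH]; intros H.
  - apply closed_ext with (fun _ => False); [apply closed_empty|]. intro; simpl; firstorder.
  - apply closed_ext with (fun x => F a x \/ exists t, In t l /\ F t x).
    + apply closed_or; [apply H; simpl; auto|apply IH; intros; apply H; simpl; auto].
    + intro x; simpl; split.
      * intros [Ha|[t [Ht Hx]]]; eauto.
      * intros [t [[<-|Ht] Hx]]; eauto.
Qed.

Lemma closed_fin_union (T : Type) (P : T -> Prop) (l : list T) (F : T -> X -> Prop) :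
  (forall t, P t -> In t l) -> (forall t, P t -> closed (F t)) ->
  closed (fun x => exists t, P t /\ F t x).
Proof.
  intros Hl HF.
  apply closed_ext with (fun x => exists t, In t l /\ (fun y => P t /\ F t y) x).
  - apply closed_list_union. intros t _. destruct (classic (P t)) as [Pt|nPt].
    + apply closed_ext with (F t); [auto|]. intro; tauto.
    + apply closed_ext with (fun _ => False); [apply closed_empty|]. intro; tauto.
  - intro x; split.
    + intros [t [_ H]]; eauto.
    + intros [t H]; exists t; split; [apply Hl|]; tauto.
Qed.

Lemma clopen_and (A B : X -> Prop) : clopen A -> clopen B -> clopen (fun x => A x /\ B x).
Proof. intros [] []; split; [apply open_inter|apply closed_and]; auto. Qed.

Lemma clopen_or (A B : X -> Prop) : clopen A -> clopen B -> clopen (fun x => A x \/ B x).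
Proof. intros [] []; split; [apply open_or|apply closed_or]; auto. Qed.

Lemma clopen_compl (A : X -> Prop) : clopen A -> clopen (fun x => ~ A x).
Proof.
  intros [HO HC]; split; [exact HC|].
  unfold closed. apply open_ext with (1 := HO). intro; split; [tauto|apply NNPP].
Qed.

Definition compact_set (F : X -> Prop) :=
  forall (I : Type) (U : I -> X -> Prop), (forall i, open (U i)) ->
    (forall x, F x -> exists i, U i x) ->
    exists l : list I, forall x, F x -> exists i, In i l /\ U i x.

Lemma compact_closed_set (F : X -> Prop) : compact X -> closed F -> compact_set F.
Proof.
  intros HX HF I U HU Hcov.
  destruct (HX (option I) (fun o => match o with Some i => U i | None => fun x => ~ F x end))
    as [l Hl].
  - intros [i|]; auto.
  - intro x. destruct (classic (F x)) as [Fx|nFx].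
    + destruct (Hcov x Fx) as [i Hi]. exists (Some i); auto.
    + exists None; auto.
  - exists (flat_map (fun o => match o with Some i => [i] | None => [] end) l).
    intros x Fx. destruct (Hl x) as [[i|] [Hi Hx]].
    + exists i; split; auto. apply in_flat_map. exists (Some i); simpl; auto.
    + contradiction.
Qed.

Lemma compact_full : compact X -> compact_set (fun _ => True).
Proof.
  intros HX I U HU Hc. destruct (HX I U HU) as [l Hl].
  - intro x; apply Hc; auto.
  - exists l; intros; auto.
Qed.

Lemma compact_set_or (A B : X -> Prop) : compact_set A -> compact_set B -> compact_set (fun x => A x \/ B x).
Proof.
  intros HA HB I U HU Hc.
  destruct (HA I U HU) as [l1 H1]; [intros; apply Hc; auto|].
  destruct (HB I U HU) as [l2 H2]; [intros; apply Hc; auto|].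
  exists (l1 ++ l2). intros x [Ax|Bx].
  - destruct (H1 x Ax) as [i [Hi Ui]]; exists i; split; auto; apply in_or_app; auto.
  - destruct (H2 x Bx) as [i [Hi Ui]]; exists i; split; auto; apply in_or_app; auto.
Qed.

Lemma compact_set_sub (A B : X -> Prop) : compact_set A -> (forall x, B x <-> A x) -> compact_set B.
Proof.
  intros HA H I U HU Hc. destruct (HA I U HU) as [l Hl].
  - intros x Ax; apply Hc, H; auto.
  - exists l; intros x Bx; apply Hl, H; auto.
Qed.

End Basics.

Section Haus.
Context {X : space}.

Lemma open_cond (P : Prop) (U : X -> Prop) : (P -> open U) -> open (fun x => P /\ U x).
Proof.
  intros H. destruct (classic P) as [p|np].
  - apply open_ext with U; [auto|]. intro; tauto.
  - apply open_ext with (fun _ => False); [apply open_empty|]. intro; tauto.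
Qed.

Lemma open_Union_cond (I : Type) (P : I -> Prop) (U : I -> X -> Prop) :
  (forall i, P i -> open (U i)) -> open (fun x => exists i, P i /\ U i x).
Proof. intros H. apply open_Union. intro i. apply open_cond; auto. Qed.

Lemma sep_point_compact (F : X -> Prop) (x : X) :
  hausdorff X -> compact_set F -> ~ F x ->
  exists U V, open U /\ open V /\ (forall y, F y -> U y) /\ V x /\ (forall z, U z -> V z -> False).
Proof.
  intros HH HF nFx.
  pose (T := {p : (X -> Prop) * (X -> Prop) | open (fst p) /\ open (snd p) /\ snd p x /\
               forall z, fst p z -> snd p z -> False}).
  destruct (HF T (fun t => fst (proj1_sig t))) as [l Hl].
  - intros [p Hp]; simpl; tauto.
  - intros y Fy. assert (y <> x) by (intro; subst; auto).
    destruct (HH y x H) as [U [V [HU [HV [Uy [Vx Hd]]]]]].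
    exists (exist _ (U, V) (conj HU (conj HV (conj Vx Hd)))); simpl; auto.
  - exists (fun y => exists t, In t l /\ fst (proj1_sig t) y).
    exists (fun y => forall t, In t l -> snd (proj1_sig t) y).
    split; [|split; [|split; [|split]]].
    + apply open_Union_cond. intros t _; destruct t as [p Hp]; simpl; tauto.
    + apply open_list_inter. intros t _; destruct t as [p Hp]; simpl; tauto.
    + intros y Fy. destruct (Hl y Fy) as [t [Ht Hy]]; eauto.
    + intros t _; destruct t as [p Hp]; simpl; tauto.
    + intros z [t [Ht Hz]] Hv. specialize (Hv t Ht). destruct t as [p Hp]; simpl in *.
      destruct Hp as (H1 & H2 & H3 & Hd); eauto.
Qed.

Lemma compact_set_closed (F : X -> Prop) : hausdorff X -> compact_set F -> closed F.
Proof.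
  intros HH HF. unfold closed. apply open_nbhd. intros x nFx.
  destruct (sep_point_compact F x HH HF nFx) as [U [V [HU [HV [HFU [Vx Hd]]]]]].
  exists V; split; [|split]; auto. intros y Vy Fy; eauto.
Qed.

Lemma sep_compact_compact (A B : X -> Prop) :
  hausdorff X -> compact_set A -> compact_set B -> (forall x, A x -> B x -> False) ->
  exists UA UB, open UA /\ open UB /\ (forall y, A y -> UA y) /\ (forall y, B y -> UB y) /\
    (forall z, UA z -> UB z -> False).
Proof.
  intros HH HA HB Hd.
  pose (T := {p : (X -> Prop) * (X -> Prop) | open (fst p) /\ open (snd p) /\
               (forall y, B y -> snd p y) /\ forall z, fst p z -> snd p z -> False}).
  destruct (HA T (fun t => fst (proj1_sig t))) as [l Hl].
  - intros [p Hp]; simpl; tauto.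
  - intros x Ax. assert (nB : ~ B x) by eauto.
    destruct (sep_point_compact B x HH HB nB) as [U [V [HU [HV [HBU [Vx Hd']]]]]].
    assert (Hd'' : forall z, V z -> U z -> False) by eauto.
    exists (exist _ (V, U) (conj HV (conj HU (conj HBU Hd'')))); simpl; auto.
  - exists (fun y => exists t, In t l /\ fst (proj1_sig t) y).
    exists (fun y => forall t, In t l -> snd (proj1_sig t) y).
    split; [|split; [|split; [|split]]].
    + apply open_Union_cond. intros t _; destruct t as [p Hp]; simpl; tauto.
    + apply open_list_inter. intros t _; destruct t as [p Hp]; simpl; tauto.
    + intros y Ay. destruct (Hl y Ay) as [t [Ht Hy]]; eauto.
    + intros y By [p Hp] _; simpl. destruct Hp as (H1 & H2 & H & H4); auto.
    + intros z [t [Ht Hz]] Hv. specialize (Hv t Ht). destruct t as [p Hp]; simpl in *.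
      destruct Hp as (H1 & H2 & H3 & Hd2); eauto.
Qed.

Lemma closed_point (z : X) : hausdorff X -> closed (fun x => x = z).
Proof.
  intros HH. unfold closed. apply open_nbhd. intros x Hx.
  destruct (HH x z Hx) as [U [V [HU [HV [Ux [Vz Hd]]]]]].
  exists U; split; [|split]; auto. intros y Uy ->; eauto.
Qed.

Lemma open_cofinite1 (S : X -> Prop) : hausdorff X ->
  (forall z1 z2, ~ S z1 -> ~ S z2 -> z1 = z2) -> open S.
Proof.
  intros HH H. destruct (classic (exists z, ~ S z)) as [[z nz]|nex].
  - apply open_ext with (fun x => ~ (x = z)).
    + apply closed_point; auto.
    + intro x; split.
      * intros nxz. apply NNPP. intro nSx. apply nxz. apply H; auto.
      * intros Sx ->; auto.
  - apply open_ext with (fun _ => True); [apply open_full|].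
    intro x; split; auto. intros _. apply NNPP. intro n. apply nex; eauto.
Qed.

End Haus.

Definition continuous {Y Z : space} (f : Y -> Z) := forall W, open W -> open (fun y => W (f y)).

Lemma compact_image {Y Z : space} (f : Y -> Z) (A : Y -> Prop) :
  continuous f -> compact_set A -> compact_set (fun z => exists y, A y /\ f y = z).
Proof.
  intros Hf HA I U HU Hc.
  destruct (HA I (fun i y => U i (f y))) as [l Hl].
  - intro i; apply Hf; auto.
  - intros y Ay. apply Hc; eauto.
  - exists l. intros z [y [Ay <-]]. auto.
Qed.

Section Sub.
Context {X : space}.

Definition rep (S : X -> Prop) (V : subspace S -> Prop) : X -> Prop :=
  fun x => exists O, open O /\ (forall s, V s <-> O (proj1_sig s)) /\ O x.

Lemma rep_open S V : open (rep S V).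
Proof.
  unfold rep. apply open_ext with (fun x => exists O, (open O /\ forall s, V s <-> O (proj1_sig s)) /\ O x).
  - apply open_union; tauto.
  - intro x; split; intros [O H]; exists O; tauto.
Qed.

Lemma rep_spec S (V : subspace S -> Prop) : open V -> forall s, V s <-> rep S V (proj1_sig s).
Proof.
  intros [O [HO HV]] s. split.
  - intros Vs. exists O; split; [|split]; auto. apply HV; auto.
  - intros [O' [_ [H' Hs]]]. apply H'; auto.
Qed.

Lemma sub_open_of S (O : X -> Prop) : open O -> @open (subspace S) (fun s => O (proj1_sig s)).
Proof. intros H. exists O; split; auto. tauto. Qed.

Lemma sub_open_ex S (V : subspace S -> Prop) : open V ->
  exists O : X -> Prop, open O /\ forall s, V s <-> O (proj1_sig s).
Proof. intros H; exact H. Qed.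

Lemma sig_eq S (s1 s2 : {x : X | S x}) : proj1_sig s1 = proj1_sig s2 -> s1 = s2.
Proof.
  destruct s1 as [x1 h1], s2 as [x2 h2]; simpl; intros ->. f_equal. apply proof_irrelevance.
Qed.

Lemma compact_sub (F : X -> Prop) : compact X -> closed F -> compact (subspace F).
Proof.
  intros HX HF I U HU Hc.
  destruct (compact_closed_set F HX HF I (fun i => rep F (U i))) as [l Hl].
  - intro; apply rep_open.
  - intros x Fx. destruct (Hc (exist _ x Fx)) as [i Hi]. exists i.
    apply (rep_spec F (U i) (HU i) (exist _ x Fx)); auto.
  - exists l. intros [x Fx]. destruct (Hl x Fx) as [i [Hi Hx]]. exists i; split; auto.
    apply (rep_spec F (U i) (HU i) (exist _ x Fx)); auto.
Qed.

Lemma hausdorff_sub (S : X -> Prop) : hausdorff X -> hausdorff (subspace S).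
Proof.
  intros HH [x hx] [y hy] Hne. assert (x <> y) by (intro; subst; apply Hne; apply sig_eq; auto).
  destruct (HH x y H) as [U [V [HU [HV [Ux [Vy Hd]]]]]].
  exists (fun s => U (proj1_sig s)), (fun s => V (proj1_sig s)).
  split; [apply sub_open_of; auto|split; [apply sub_open_of; auto|]].
  simpl; split; [|split]; auto. intros z; eauto.
Qed.

Lemma embed_sub_sub (S T : X -> Prop) (g : subspace S -> subspace T) :
  (forall s, proj1_sig (g s) = proj1_sig s) -> embedding g.
Proof.
  intros Hg. split; [|split].
  - intros s1 s2 E. apply sig_eq. rewrite <- (Hg s1), <- (Hg s2), E; auto.
  - intros W HW. destruct (sub_open_ex T W HW) as [O [HO HWO]].
    apply open_ext with (fun s => O (proj1_sig s)); [apply sub_open_of; auto|].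
    intro s. rewrite HWO, Hg. tauto.
  - intros V HV. destruct (sub_open_ex S V HV) as [O [HO HVO]].
    exists (fun t => O (proj1_sig t)); split; [apply sub_open_of; auto|].
    intro s. rewrite HVO, Hg. tauto.
Qed.

Lemma embed_sub_full (S : X -> Prop) : embedding (fun s : subspace S => proj1_sig s).
Proof.
  split; [|split].
  - intros s1 s2 E. apply sig_eq; auto.
  - intros W HW. apply sub_open_of; auto.
  - intros V HV. destruct (sub_open_ex S V HV) as [O [HO HVO]]. exists O; split; auto.
Qed.

Lemma embed_full_sub (T : X -> Prop) (g : X -> subspace T) :
  (forall x, proj1_sig (g x) = x) -> embedding g.
Proof.
  intros Hg. split; [|split].
  - intros x1 x2 E. rewrite <- (Hg x1), <- (Hg x2), E; auto.
  - intros W HW. destruct (sub_open_ex T W HW) as [O [HO HWO]].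
    apply open_ext with O; auto. intro x. rewrite HWO, Hg. tauto.
  - intros V HV. exists (fun t => V (proj1_sig t)); split; [apply sub_open_of; auto|].
    intro x; rewrite Hg; tauto.
Qed.

End Sub.

Section ZD.
Context {X : space} (HX : compact X) (HH : hausdorff X) (HS : scattered X).

Definition Qc (x y : X) := forall C, clopen C -> C x -> C y.

Lemma Qc_closed x : closed (Qc x).
Proof.
  apply closed_ext with (fun y => forall t : {C : X -> Prop | clopen C /\ C x}, proj1_sig t y).
  - apply closed_Inter. intros [C HC']; simpl; apply (proj2 (proj1 HC')).
  - intro y; split.
    + intros H C HC Cx. apply (H (exist _ C (conj HC Cx))).
    + intros H [C [HC Cx]]; simpl; apply H; auto.
Qed.

Lemma qstep x (U : X -> Prop) : open U -> (forall y, Qc x y -> U y) ->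
  exists C : X -> Prop, clopen C /\ C x /\ forall y, C y -> U y.
Proof.
  intros HU HQ.
  assert (HF : compact_set (fun y => ~ U y)) by (apply compact_closed_set; auto; apply closed_compl; auto).
  destruct (HF {C : X -> Prop | clopen C /\ C x} (fun t y => ~ proj1_sig t y)) as [l Hl].
  - intros [C HC']; simpl; apply (proj2 (proj1 HC')).
  - intros y nUy. assert (~ Qc x y) by (intro; eauto).
    unfold Qc in H. apply not_all_ex_not in H. destruct H as [C HC].
    apply imply_to_and in HC. destruct HC as [HC HC2]. apply imply_to_and in HC2.
    destruct HC2 as [Cx nCy]. exists (exist _ C (conj HC Cx)); simpl; auto.
  - exists (fun y => forall t, In t l -> proj1_sig t y). split; [split|split].
    + apply open_list_inter. intros t _; destruct t as [C HC']; simpl; apply (proj1 (proj1 HC')).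
    + apply closed_ext with (fun y => forall t : {t | In t l}, proj1_sig (proj1_sig t) y).
      * apply closed_Inter. intros [[C HC'] Ht]; simpl; apply (proj2 (proj1 HC')).
      * intro y; split.
        -- intros H t Ht. apply (H (exist _ t Ht)).
        -- intros H [t Ht]; simpl; auto.
    + intros t _; destruct t as [C HC']; simpl; apply (proj2 HC').
    + intros y Hy. apply NNPP; intro nUy. destruct (Hl y nUy) as [t [Ht Hn]]. apply Hn; auto.
Qed.

Lemma qconn x (A B : X -> Prop) : closed A -> closed B -> (forall y, A y -> B y -> False) ->
  (forall y, Qc x y -> A y \/ B y) -> A x -> forall y, Qc x y -> B y -> False.
Proof.
  intros HA HB Hd Hc Ax.
  destruct (sep_compact_compact A B HH (compact_closed_set A HX HA) (compact_closed_set B HX HB) Hd)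
    as [UA [UB [HUA [HUB [HAU [HBU Hd2]]]]]].
  destruct (qstep x (fun y => UA y \/ UB y)) as [C [[HCo HCc] [Cx HCU]]].
  - apply open_or; auto.
  - intros y Hy. destruct (Hc y Hy); auto.
  - assert (HD : clopen (fun y => C y /\ UA y)).
    { split.
      - apply open_inter; auto.
      - apply closed_ext with (fun y => C y /\ ~ UB y).
        + apply closed_and; auto. apply closed_compl; auto.
        + intro y; split.
          * intros [Cy nUB]. split; auto. destruct (HCU y Cy); tauto.
          * intros [Cy UAy]. split; eauto. }
    intros y Qy By. destruct (Qy _ HD (conj Cx (HAU x Ax))) as [_ UAy]. eauto.
Qed.

Lemma Qc_single x y : Qc x y -> y = x.
Proof.
  intros Qy.
  destruct (HS (Qc x) (ex_intro _ x (fun C _ Cx => Cx))) as [q [Qq [O [HO [Oq Hiso]]]]].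
  destruct (classic (q = x)) as [->|nqx].
  - apply NNPP. intro nyx.
    apply (qconn x (fun z => z = x) (fun z => Qc x z /\ ~ O z)) with (y := y); auto.
    + apply closed_point; auto.
    + apply closed_and; [apply Qc_closed|apply closed_compl; auto].
    + intros z -> [_ nO]; auto.
    + intros z Qz. destruct (classic (O z)); [left; auto|right; auto].
  - exfalso. apply (qconn x (fun z => Qc x z /\ ~ O z) (fun z => z = q)) with (y := q); auto.
    + apply closed_and; [apply Qc_closed|apply closed_compl; auto].
    + apply closed_point; auto.
    + intros z [_ nO] ->; auto.
    + intros z Qz. destruct (classic (O z)); [right; auto|left; auto].
    + split; [intros C _ Cx; auto|]. intro Ox. apply nqx. symmetry. apply Hiso; auto.
      intros C _ Cx; auto.
Qed.

Lemma zero_dim x (U : X -> Prop) : open U -> U x ->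
  exists C : X -> Prop, clopen C /\ C x /\ forall y, C y -> U y.
Proof. intros HU Ux. apply qstep; auto. intros y Qy. rewrite (Qc_single x y Qy); auto. Qed.

Lemma sep_clopen x p : x <> p -> exists C : X -> Prop, clopen C /\ C x /\ ~ C p.
Proof.
  intros Hne. destruct (HH x p Hne) as [U [V [HU [HV [Ux [Vp Hd]]]]]].
  destruct (zero_dim x U HU Ux) as [C [HC [Cx HCU]]]. exists C; split; [|split]; auto.
  intro Cp. eauto.
Qed.

End ZD.

Lemma classA_ch (Z : space) : classA Z -> compact Z /\ hausdorff Z.
Proof.
  intros H; destruct H as [Z HZ|Z [x Hx]|I K Z e HK [Hc [Hh _]]].
  - split.
    + intros I U _ _. exists nil. intro x; destruct (HZ x).
    + intro x; destruct (HZ x).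
  - split.
    + intros I U _ Hc. destruct (Hc x) as [i Hi]. exists [i]. intro y.
      rewrite (Hx y). exists i; simpl; auto.
    + intros y z Hne. exfalso. apply Hne. rewrite (Hx y), (Hx z); auto.
  - auto.
Qed.

Definition Im {A B : space} (f : A -> B) : B -> Prop := fun z => exists a, f a = z.

Lemma embedding_cont {A B : space} (f : A -> B) : embedding f -> continuous f.
Proof. intros [_ [H _]]; exact H. Qed.

Lemma piece_image_open {I : Type} {K : I -> space} {Z : space} (e : sum_space K -> Z) :
  embedding e -> open (Im e) ->
  forall i (U : K i -> Prop), open U -> open (fun z => exists k, U k /\ e (existT _ i k) = z).
Proof.
  intros [Hinj [Hc Ho]] HIm i U HU.
  destruct (Ho (fun s => exists k, U k /\ s = existT _ i k)) as [W [HW HWs]].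
  - intro i'. destruct (classic (i' = i)) as [->|ne].
    + apply open_ext with U; auto. intro x; split.
      * intros Ux; eauto.
      * intros [k [Uk E]]. apply inj_pair2 in E. subst; auto.
    + apply open_ext with (fun _ => False); [apply open_empty|]. intro x; split; [tauto|].
      intros [k [_ E]]. apply ne. apply (f_equal (@projT1 _ _) E).
  - apply open_ext with (fun z => W z /\ Im e z).
    + apply open_inter; auto.
    + intro z; split.
      * intros [Wz [s <-]]. apply HWs in Wz. destruct Wz as [k [Uk ->]]; eauto.
      * intros [k [Uk <-]]. split; [|eexists; eauto]. apply HWs; eauto.
Qed.

Lemma closed_preimage {A B : space} (f : A -> B) (F : B -> Prop) :
  continuous f -> closed F -> closed (fun a => F (f a)).
Proof. intros Hf HF. unfold closed. apply (Hf _ HF). Qed.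

Section Build.
Context (Z : space) (HZc : compact Z) (HZh : hausdorff Z) (I : Type) (K : I -> space)
  (HK : forall i, classA (K i)) (f : forall i, K i -> Z) (Hf : forall i, embedding (f i))
  (Himg : forall i, open (fun z => exists k, f i k = z))
  (Hdisj : forall i j (k : K i) (k' : K j), f i k = f j k' -> existT (fun i => pt (K i)) i k = existT (fun i => pt (K i)) j k').

Definition ef (s : sum_space K) : Z := f (projT1 s) (projT2 s).

Lemma ef_embedding : embedding ef.
Proof.
  split; [|split].
  - intros [i k] [j k'] E. apply Hdisj; auto.
  - intros W HW i. simpl. apply (embedding_cont (f i) (Hf i)); auto.
  - intros V HV.
    exists (fun z => exists t : {p : I * (Z -> Prop) | open (snd p) /\
                 forall k, V (existT _ (fst p) k) <-> snd p (f (fst p) k)},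
               snd (proj1_sig t) z /\ exists k, f (fst (proj1_sig t)) k = z).
    split.
    + apply open_Union. intros t; destruct t as [[i O] HO']; simpl. apply open_inter; [apply (proj1 HO')|apply Himg].
    + intros [i k]. unfold ef; simpl. split.
      * intros Vik.
        destruct (proj2 (proj2 (Hf i)) (fun k => V (existT _ i k)) (HV i)) as [O [HO HVO]].
        exists (exist _ (i, O) (conj HO HVO)); simpl. split; [apply HVO; auto|eauto].
      * intros [[[j O] [HO HVO]] [Oz [k' Ek]]]; simpl in *.
        pose proof (Hdisj _ _ _ _ Ek) as E. rewrite <- E. apply HVO. rewrite Ek; auto.
Qed.

Lemma build_dense :
  (forall z1 z2, (forall i k, f i k <> z1) -> (forall i k, f i k <> z2) -> z1 = z2) ->
  (forall W : Z -> Prop, open W -> (exists z, W z) -> exists i k, W (f i k)) ->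
  classA Z.
Proof.
  intros Hcomp Hdense. apply (@A_compactify I K Z ef); auto.
  split; [auto|split; [auto|split; [apply ef_embedding|split]]].
  - intros W HW Hne. destruct (Hdense W HW Hne) as [i [k Hk]]. exists (existT _ i k); auto.
  - intros z1 z2 H1 H2. apply Hcomp.
    + intros i k E. apply (H1 (existT _ i k)); auto.
    + intros i k E. apply (H2 (existT _ i k)); auto.
Qed.

End Build.

Definition optK {I : Type} (K : I -> space) {Z : space} (z0 : Z) (o : option I) : space :=
  match o with Some i => K i | None => subspace (fun z : Z => z = z0) end.

Definition optf {I : Type} {K : I -> space} {Z : space} (z0 : Z) (f : forall i, K i -> Z)
  (o : option I) : optK K z0 o -> Z :=
  match o return optK K z0 o -> Z with
  | Some i => f i
  | None => fun s => proj1_sig s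
  end.

Lemma build (Z : space) (HZc : compact Z) (HZh : hausdorff Z) (I : Type) (K : I -> space)
  (HK : forall i, classA (K i)) (f : forall i, K i -> Z) (Hf : forall i, embedding (f i))
  (Himg : forall i, open (fun z => exists k, f i k = z))
  (Hdisj : forall i j (k : K i) (k' : K j), f i k = f j k' ->
      existT (fun i => pt (K i)) i k = existT (fun i => pt (K i)) j k')
  (Hcomp : forall z1 z2, (forall i k, f i k <> z1) -> (forall i k, f i k <> z2) -> z1 = z2) :
  classA Z.
Proof.
  destruct (classic (exists z0, (forall i k, f i k <> z0) /\ open (fun z => z = z0)))
    as [[z0 [Hz0 Ho0]]|nex].
  - pose (s0 := exist (fun z : Z => z = z0) z0 eq_refl).
    refine (build_dense Z HZc HZh (option I) (optK K z0) _ (optf z0 f) _ _ _ _ _).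
    + intros [i|]; simpl; auto. apply A_point. exists (s0).
      intros [y Hy]. apply sig_eq; auto.
    + intros [i|]; simpl; auto. apply embed_sub_full.
    + intros [i|]; simpl; auto. apply open_ext with (fun z => z = z0); auto.
      intro z; split.
      * intros ->. exists (s0); auto.
      * intros [[y Hy] <-]; auto.
    + intros [i|] [j|] k k' E; simpl in *.
      * pose proof (Hdisj i j k k' E) as E2.
        apply (f_equal (fun s : {i : I & K i} =>
                 existT (fun o => pt (optK K z0 o)) (Some (projT1 s)) (projT2 s)) E2).
      * exfalso. destruct k' as [y Hy]; simpl in *. subst. apply (Hz0 i k); auto.
      * exfalso. destruct k as [y Hy]; simpl in *. subst. apply (Hz0 j k'); auto.
      * assert (k = k') by (apply sig_eq; auto). subst; auto.
    + intros z1 z2 H1 H2. exfalso.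
      destruct (classic (z1 = z0)) as [->|ne].
      * apply (H1 None (s0)); auto.
      * apply ne. apply Hcomp; auto. intros i k; apply (H1 (Some i) k).
    + intros W HW [z Wz]. destruct (classic (z = z0)) as [->|ne].
      * exists None, (s0); auto.
      * destruct (classic (exists i k, f i k = z)) as [[i [k <-]]|nz].
        -- exists (Some i), k; auto.
        -- exfalso. apply ne. apply Hcomp; auto.
           intros i k E; apply nz; eauto.
  - apply (build_dense Z HZc HZh I K HK f); auto.
    intros W HW [z Wz]. apply NNPP; intro nW.
    destruct (classic (exists i k, f i k = z)) as [[i [k <-]]|nz].
    + apply nW; eauto.
    + apply nex. exists z; split.
      * intros i k E; apply nz; eauto.
      * apply open_ext with W; auto. intro y; split.
        -- intros Wy. apply Hcomp.
           ++ intros i k E. apply nW. exists i, k. rewrite E; auto.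
           ++ intros i k E; apply nz; eauto.
        -- intros ->; auto.
Qed.

Lemma e_cont {I : Type} {K : I -> space} {Z : space} (e : sum_space K -> Z) i :
  embedding e -> continuous (fun k : K i => e (existT _ i k)).
Proof. intros [_ [Hc _]] W HW. apply (Hc W HW i). Qed.

Lemma Im_e_open {I : Type} {K : I -> space} {Z : space} (e : sum_space K -> Z) :
  aleksandrov_compactification e -> open (Im e).
Proof.
  intros [_ [Hh [_ [_ Hcomp]]]]. apply open_cofinite1; auto.
  intros z1 z2 n1 n2. apply Hcomp.
  - intros y E; apply n1; exists y; auto.
  - intros y E; apply n2; exists y; auto.
Qed.

Lemma clopen_preimage {A B : space} (f : A -> B) (F : B -> Prop) :
  continuous f -> clopen F -> clopen (fun a => F (f a)).
Proof. intros Hf [Ho Hc]. split; [apply Hf; auto|apply closed_preimage; auto]. Qed.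

Lemma clopen_ext {X : space} (F G : X -> Prop) : clopen F -> (forall x, F x <-> G x) -> clopen G.
Proof. intros [Ho Hc] H. split; [apply open_ext with F|apply closed_ext with F]; auto. Qed.

Lemma clopen_emb_A (Z : space) : classA Z ->
  forall (Z' : space) (g : Z' -> Z), compact Z' -> hausdorff Z' -> embedding g ->
  clopen (Im g) -> classA Z'.
Proof.
  intros HA; induction HA as [Z HZ|Z [x Hx]|I K Z e HK IH Hal];
    intros Z' g HZc HZh Hg Hcl.
  - apply A_empty. intro z; apply (HZ (g z)).
  - destruct (classic (exists z : Z', True)) as [[z _]|nz].
    + apply A_point. exists z. intro y. apply (proj1 Hg). rewrite (Hx (g y)), (Hx (g z)); auto.
    + apply A_empty. intro z; apply nz; eauto.
  - pose proof (Im_e_open e Hal) as HIm.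
    destruct Hal as [Hc [Hh [He [Hd Hcomp]]]].
    destruct Hg as [ginj [gcont gopen]].
    pose (S' := fun i (z' : Z') => exists k : K i, g z' = e (existT _ i k)).
    pose (K' := fun i => subspace (S' i)).
    pose (phi := fun i (s : K' i) => proj1_sig (constructive_indefinite_description _ (proj2_sig s))).
    assert (Hphi : forall i (s : K' i), g (proj1_sig s) = e (existT _ i (phi i s))).
    { intros i s. unfold phi. destruct (constructive_indefinite_description _ _); simpl; auto. }
    assert (Hinj_e : forall i (k1 k2 : K i), e (existT _ i k1) = e (existT _ i k2) -> k1 = k2).
    { intros i k1 k2 E. apply (proj1 He) in E. apply inj_pair2 in E; auto. }
    assert (HimgO : forall i, open (fun z => exists k : K i, True /\ e (existT _ i k) = z)).
    { intro i. apply (piece_image_open e He HIm i (fun _ => True)). apply open_full. }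
    assert (HS'o : forall i, open (S' i)).
    { intro i. apply open_ext with (fun z' => exists k : K i, True /\ e (existT _ i k) = g z').
      - apply (gcont _ (HimgO i)).
      - intro z'; split; intros [k Hk]; exists k; intuition. }
    assert (HS'c : forall i, closed (S' i)).
    { intro i. apply closed_ext with (fun z' => exists k : K i, True /\ e (existT _ i k) = g z').
      - apply (closed_preimage g (fun z => exists k : K i, True /\ e (existT _ i k) = z)); [exact gcont|].
        apply compact_set_closed; auto.
        apply compact_image; [apply e_cont; auto|].
        apply compact_full. apply (proj1 (classA_ch _ (HK i))).
      - intro z'; split; intros [k Hk]; exists k; intuition. }
    apply (build Z' HZc HZh I K') with (f := fun i (s : K' i) => proj1_sig s).
    + intro i. apply (IH i (K' i) (phi i)).
      * apply compact_sub; auto.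
      * apply hausdorff_sub; auto.
      * split; [|split].
        -- intros s1 s2 E. apply sig_eq. apply ginj. rewrite !Hphi, E; auto.
        -- intros W HW.
           pose proof (piece_image_open e He HIm i W HW) as HO.
           apply open_ext with (fun s : K' i => (fun z' => exists k, W k /\ e (existT _ i k) = g z') (proj1_sig s)).
           ++ exact (@sub_open_of Z' (S' i) _ (gcont _ HO)).
           ++ intro s; simpl. split.
              ** intros [k [Wk Ek]]. rewrite Hphi in Ek. apply Hinj_e in Ek. subst; auto.
              ** intros Ws. exists (phi i s); split; auto.
        -- intros V HV. destruct (sub_open_ex _ V HV) as [U [HU HVU]].
           destruct (gopen U HU) as [U2 [HU2 HUU2]].
           exists (fun k => U2 (e (existT _ i k))). split.
           ++ apply e_cont; auto.
           ++ intro s. rewrite HVU, HUU2, Hphi. tauto.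
      * assert (E : forall k, Im (phi i) k <-> Im g (e (existT _ i k))).
        { intro k; split.
          - intros [s <-]. exists (proj1_sig s). apply Hphi.
          - intros [z' Ez']. exists (exist (S' i) z' (ex_intro _ k Ez')).
            apply Hinj_e. rewrite <- Hphi. simpl. auto. }
        apply clopen_ext with (fun k => Im g (e (existT _ i k))).
        -- apply clopen_preimage; [apply e_cont; auto|auto].
        -- intro k; rewrite E; tauto.
    + intro i; apply embed_sub_full.
    + intro i. apply open_ext with (S' i); auto. intro z; split.
      * intros Hz. exists (exist (S' i) z Hz); auto.
      * intros [s <-]. exact (proj2_sig s).
    + intros i j s s' E; simpl in E.
      destruct s as [z hz], s' as [z' hz']; simpl in E; subst z'.
      destruct hz as [k Hk], hz' as [k' Hk'] eqn:Ehz'.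
      assert (E2 := proj1 He _ _ (eq_trans (eq_sym Hk) Hk')).
      assert (i = j) by apply (f_equal (@projT1 _ _) E2). subst j.
      f_equal. apply sig_eq; auto.
    + intros z1 z2 H1 H2. apply ginj. apply Hcomp.
      * intros [i k] E. apply (H1 i (exist (S' i) z1 (ex_intro _ k (eq_sym E)))); auto.
      * intros [i k] E. apply (H2 i (exist (S' i) z2 (ex_intro _ k (eq_sym E)))); auto.
Qed.

Definition PCX (Z : space) (S : Z -> Prop) : Prop :=
  forall (I : Type) (U : I -> Z -> Prop), (forall i, open (U i)) -> (forall x, S x -> exists i, U i x) ->
  exists (J : Type) (V : J -> Z -> Prop), (forall j, open (V j)) /\ (forall x, S x -> exists j, V j x) /\
    (forall j, exists i, forall x, S x -> V j x -> U i x) /\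
    (forall x, S x -> exists W, open W /\ W x /\ exists l : list J,
        forall j, (exists y, S y /\ W y /\ V j y) -> In j l).

Lemma pc_to_PCX (Z : space) (S : Z -> Prop) : paracompact (subspace S) -> PCX Z S.
Proof.
  intros Hp I U HU Hc.
  destruct (Hp I (fun i s => U i (proj1_sig s))) as [J [V [Vo [Vc [Vr Vl]]]]].
  - intro i. apply sub_open_of; auto.
  - intros [x Sx]. apply (Hc x Sx).
  - exists J, (fun j => rep S (V j)). split; [|split; [|split]].
    + intro j; apply rep_open.
    + intros x Sx. destruct (Vc (exist _ x Sx)) as [j Hj]. exists j.
      apply (rep_spec S (V j) (Vo j) (exist _ x Sx)); auto.
    + intro j. destruct (Vr j) as [i Hi]. exists i. intros x Sx Hx.
      apply (Hi (exist _ x Sx)). apply (rep_spec S (V j) (Vo j) (exist _ x Sx)); auto.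
    + intros x Sx. destruct (Vl (exist _ x Sx)) as [W [HW [Wx [l Hl]]]].
      exists (rep S W). split; [apply rep_open|split].
      * apply (rep_spec S W HW (exist _ x Sx)); auto.
      * exists l. intros j [y [Sy [Wy Vy]]]. apply Hl. exists (exist _ y Sy). split.
        -- apply (rep_spec S W HW (exist _ y Sy)); auto.
        -- apply (rep_spec S (V j) (Vo j) (exist _ y Sy)); auto.
Qed.

Lemma PCX_to_pc (Z : space) (S : Z -> Prop) : PCX Z S -> paracompact (subspace S).
Proof.
  intros Hp I U HU Hc.
  destruct (Hp I (fun i => rep S (U i))) as [J [V [Vo [Vc [Vr Vl]]]]].
  - intro i; apply rep_open.
  - intros x Sx. destruct (Hc (exist _ x Sx)) as [i Hi]. exists i.
    apply (rep_spec S (U i) (HU i) (exist _ x Sx)); auto.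
  - exists J, (fun j s => V j (proj1_sig s)). split; [|split; [|split]].
    + intro j; apply sub_open_of; auto.
    + intros [x Sx]. apply (Vc x Sx).
    + intro j. destruct (Vr j) as [i Hi]. exists i. intros [x Sx] Hx.
      apply (rep_spec S (U i) (HU i) (exist _ x Sx)); auto.
    + intros [x Sx]. destruct (Vl x Sx) as [W [HW [Wx [l Hl]]]].
      exists (fun s => W (proj1_sig s)). split; [apply sub_open_of; auto|split; auto].
      exists l. intros j [[y Sy] [Wy Vy]]. apply Hl. exists y; auto.
Qed.

Lemma PCX_empty (Z : space) (S : Z -> Prop) I (U : I -> Z -> Prop) :
  (forall i, open (U i)) -> (forall x, ~ S x) ->
  exists (J : Type) (V : J -> Z -> Prop), (forall j, open (V j)) /\ (forall x, S x -> exists j, V j x) /\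
    (forall j, exists i, forall x, S x -> V j x -> U i x) /\
    (forall x, S x -> exists W, open W /\ W x /\ exists l : list J,
        forall j, (exists y, S y /\ W y /\ V j y) -> In j l).
Proof.
  intros HU HS. exists I, U. split; [auto|split; [|split]].
  - intros x Sx; destruct (HS x Sx).
  - intro j; exists j; auto.
  - intros x Sx; destruct (HS x Sx).
Qed.

Section Assemble.
Context {I : Type} {K : I -> space} {Z : space} (e : sum_space K -> Z) (He : embedding e)
  (HIm : open (Im e)) (S : Z -> Prop) (I0 : Type) (U : I0 -> Z -> Prop) (HU : forall u, open (U u)).
Let ei i (k : K i) := e (existT (fun i => pt (K i)) i k).
Context (Jf : I -> Type) (Vf : forall i, Jf i -> K i -> Prop)
  (Vo : forall i j, open (Vf i j))
  (Vcov : forall i k, S (ei i k) -> exists j, Vf i j k)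
  (Vref : forall i j, exists u, forall k, S (ei i k) -> Vf i j k -> U u (ei i k))
  (Vlf : forall i k, S (ei i k) -> exists W, open W /\ W k /\ exists l : list (Jf i),
      forall j, (exists y, S (ei i y) /\ W y /\ Vf i j y) -> In j l).
Context (O0 : Z -> Prop) (u0 : I0) (Q : I -> Prop) (HO0 : open O0)
  (H1 : forall z, S z -> O0 z \/ exists i k, Q i /\ ei i k = z)
  (H2 : forall z, O0 z -> U u0 z)
  (H3 : forall z, S z -> ~ Im e z -> exists W, open W /\ W z /\
          forall y, W y -> forall i k, Q i -> ei i k = y -> False).

Lemma assemble :
  exists (J : Type) (V : J -> Z -> Prop), (forall j, open (V j)) /\ (forall x, S x -> exists j, V j x) /\
    (forall j, exists i, forall x, S x -> V j x -> U i x) /\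
    (forall x, S x -> exists W, open W /\ W x /\ exists l : list J,
        forall j, (exists y, S y /\ W y /\ V j y) -> In j l).
Proof.
  exists (option {i : I & Jf i}).
  exists (fun o z => match o with
                     | None => O0 z
                     | Some p => Q (projT1 p) /\ exists k, Vf (projT1 p) (projT2 p) k /\ ei (projT1 p) k = z
                     end).
  split; [|split; [|split]].
  - intros [[i j]|]; simpl; auto. apply open_cond. intros _.
    apply (piece_image_open e He HIm i (Vf i j) (Vo i j)).
  - intros z Sz. destruct (H1 z Sz) as [Oz|[i [k [Qi <-]]]].
    + exists None; auto.
    + destruct (Vcov i k Sz) as [j Hj]. exists (Some (existT _ i j)); simpl. split; eauto.
  - intros [[i j]|]; simpl.
    + destruct (Vref i j) as [u Hu]. exists u. intros z Sz [Qi [k [Vk <-]]]. apply Hu; auto.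
    + exists u0. intros z _ Oz; auto.
  - intros z Sz. destruct (classic (Im e z)) as [[[i k] <-]|nIm].
    + destruct (Vlf i k Sz) as [W [HW [Wk [l Hl]]]].
      exists (fun z => exists k, W k /\ ei i k = z). split; [|split].
      * apply (piece_image_open e He HIm i W HW).
      * exists k; split; auto.
      * exists (None :: map (fun j => Some (existT _ i j)) l).
        intros [[i' j]|] [y [Sy [[k1 [Wk1 Ey]] Vy]]]; simpl in *.
        -- right. destruct Vy as [Qi [k2 [Vk2 Ey2]]]. rewrite <- Ey in Ey2.
           pose proof (proj1 He _ _ Ey2) as E2.
           assert (i' = i) by apply (f_equal (@projT1 _ _) E2). subst i'.
           apply inj_pair2 in E2. subst k2. apply (in_map (fun j0 : Jf i => Some (existT Jf i j0)) l j). apply Hl. exists k1.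
           split; [|split]; auto. rewrite Ey; auto.
        -- left; auto.
    + destruct (H3 z Sz nIm) as [W [HW [Wz HW2]]].
      exists W. split; [auto|split; [auto|]]. exists [None].
      intros [[i j]|] [y [Sy [Wy Vy]]]; simpl in *.
      * destruct Vy as [Qi [k [_ Ek]]]. exfalso; apply (HW2 y Wy i k Qi Ek).
      * auto.
Qed.

End Assemble.

Definition PieceSpec {I : Type} {K : I -> space} {Z : space} (e : sum_space K -> Z) (S : Z -> Prop)
  (I0 : Type) (U : I0 -> Z -> Prop) (i : I) (J : Type) (V : J -> K i -> Prop) : Prop :=
  (forall j, open (V j)) /\ (forall k, S (e (existT _ i k)) -> exists j, V j k) /\
  (forall j, exists u, forall k, S (e (existT _ i k)) -> V j k -> U u (e (existT _ i k))) /\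
  (forall k, S (e (existT _ i k)) -> exists W, open W /\ W k /\ exists l : list J,
      forall j, (exists y, S (e (existT _ i y)) /\ W y /\ V j y) -> In j l).

Lemma forward (Z : space) : classA Z -> scattered Z /\ forall S, PCX Z S.
Proof.
  intros HA; induction HA as [Z HZ|Z [x Hx]|I K Z e HK IH Hal].
  - split.
    + intros S [x _]; destruct (HZ x).
    + intros S I U HU Hc. apply PCX_empty; auto; intros x; destruct (HZ x).
  - split.
    + intros S [y Sy]. exists y. split; auto. exists (fun _ => True).
      split; [apply open_full|split; auto]. intros z _ _. rewrite (Hx z), (Hx y); auto.
    + intros S I U HU Hc. destruct (classic (S x)) as [Sx|nSx].
      * destruct (Hc x Sx) as [i0 Hi0]. exists unit, (fun _ => U i0).
        split; [intros; auto|split; [|split]].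
        -- intros y _. exists tt. rewrite (Hx y); auto.
        -- intros _. exists i0; auto.
        -- intros y _. exists (fun _ => True). split; [apply open_full|split; auto].
           exists [tt]. intros [] _; simpl; auto.
      * apply PCX_empty; auto; intros y Sy; rewrite (Hx y) in Sy; auto.
  - pose proof (Im_e_open e Hal) as HIm.
    destruct Hal as [Hc [Hh [He [Hd Hcomp]]]].
    assert (Hcompl : forall z1 z2, ~ Im e z1 -> ~ Im e z2 -> z1 = z2).
    { intros z1 z2 n1 n2. apply Hcomp; intros y E; [apply n1|apply n2]; exists y; auto. }
    split.
    + intros S [z Sz].
      destruct (classic (exists i k, S (e (existT _ i k)))) as [[i [k Sk]]|nS].
      * destruct (proj1 (IH i) (fun k => S (e (existT _ i k))) (ex_intro _ k Sk))
          as [k0 [Sk0 [U [HU [Uk0 Hiso]]]]].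
        exists (e (existT _ i k0)). split; auto.
        exists (fun z => exists k, U k /\ e (existT _ i k) = z). split; [|split].
        -- apply (piece_image_open e He HIm i U HU).
        -- eauto.
        -- intros y [k1 [Uk1 <-]] Sy. rewrite (Hiso k1 Uk1 Sy); auto.
      * assert (HnI : forall y, S y -> ~ Im e y).
        { intros y Sy [[i k] E]. apply nS. exists i, k. rewrite E; auto. }
        exists z. split; auto. exists (fun _ => True). split; [apply open_full|split; auto].
        all: intros y _ Sy; apply Hcompl; auto.
    + intros S I0 U HU Hcov.
      destruct (classic (exists x, S x)) as [[x1 Sx1]|nS].
      2:{ apply PCX_empty; auto; intros x Sx; apply nS; eauto. }
      destruct (Hcov x1 Sx1) as [u1 _].
      assert (Hp : forall i, exists (J : Type) (V : J -> K i -> Prop), PieceSpec e S I0 U i J V).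
      { intro i. apply (proj2 (IH i) (fun k => S (e (existT _ i k))) I0 (fun u k => U u (e (existT _ i k)))).
        - intro u; apply e_cont; auto.
        - intros k Sk; apply Hcov; auto. }
      pose (Jf := fun i => proj1_sig (constructive_indefinite_description _ (Hp i))).
      pose (Vf := fun i => proj1_sig (constructive_indefinite_description _
                    (proj2_sig (constructive_indefinite_description _ (Hp i))))).
      assert (Hspec : forall i, PieceSpec e S I0 U i (Jf i) (Vf i)).
      { intro i. exact (proj2_sig (constructive_indefinite_description _
                    (proj2_sig (constructive_indefinite_description _ (Hp i))))). }
      assert (Vo : forall i j, open (Vf i j)) by (intro i; apply (Hspec i)).
      assert (Vcov := fun i => proj1 (proj2 (Hspec i))).
      assert (Vref := fun i => proj1 (proj2 (proj2 (Hspec i)))).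
      assert (Vlf := fun i => proj2 (proj2 (proj2 (Hspec i)))).
      destruct (classic (exists zi, S zi /\ ~ Im e zi)) as [[zi [Szi nzi]]|nA].
      * destruct (Hcov zi Szi) as [ui Hui].
        assert (HEo : forall i, open (fun z => exists k : K i, True /\ e (existT _ i k) = z)).
        { intro i. apply (piece_image_open e He HIm i (fun _ => True)). apply open_full. }
        assert (HEc : forall i, closed (fun z => exists k : K i, True /\ e (existT _ i k) = z)).
        { intro i. apply compact_set_closed; auto. apply compact_image; [apply e_cont; auto|].
          apply compact_full. apply (proj1 (classA_ch _ (HK i))). }
        destruct (compact_closed_set (fun z => ~ U ui z) Hc (closed_compl _ (HU ui)) I
                    (fun i z => exists k : K i, True /\ e (existT _ i k) = z) HEo) as [l Hl].
        { intros z nU. destruct (classic (Im e z)) as [[[i k] <-]|nI].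
          - exists i, k; auto.
          - exfalso. apply nU. rewrite (Hcompl z zi nI nzi). auto. }
        apply (assemble e He HIm S I0 U (fun i => Jf i) Vf Vo Vcov Vref Vlf
                 (U ui) ui (fun i => In i l) (HU ui)).
        -- intros z Sz. destruct (classic (U ui z)) as [Uz|nU]; [left; auto|right].
           destruct (Hl z nU) as [i [Hi [k [_ Ek]]]]. exists i, k; auto.
        -- auto.
        -- intros z Sz nI. rewrite (Hcompl z zi nI nzi).
           exists (fun y => U ui y /\ ~ (exists i, In i l /\ exists k : K i, True /\ e (existT _ i k) = y)).
           split; [|split].
           ++ apply open_diff; auto. apply closed_list_union; auto.
           ++ split; auto. intros [i [_ [k [_ Ek]]]]. apply nzi. exists (existT _ i k); auto.
           ++ intros y [_ nE] i k Hi Ek. apply nE. exists i; split; auto. exists k; auto.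
      * apply (assemble e He HIm S I0 U (fun i => Jf i) Vf Vo Vcov Vref Vlf
                 (fun _ => False) u1 (fun _ => True) open_empty).
        -- intros z Sz. right. destruct (classic (Im e z)) as [[[i k] <-]|nI].
           ++ exists i, k; auto.
           ++ exfalso; apply nA; eauto.
        -- tauto.
        -- intros z Sz nI. exfalso; apply nA; eauto.
Qed.

Lemma forward_main (X : space) : classA X -> scattered X /\ hereditarily_paracompact X.
Proof.
  intros HA. destruct (forward X HA) as [Hs Hp]. split; auto.
  intro S. apply PCX_to_pc. apply Hp.
Qed.

Section Good.
Context {X : space} (HX : compact X) (HH : hausdorff X).

Definition good (T : X -> Prop) := classA (subspace T).

Lemma good_ext T T' : good T -> (forall x, T x <-> T' x) -> good T'.
Proof.
  intros G E. assert (T = T') as <-; auto.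
  apply functional_extensionality; intro; apply propositional_extensionality; auto.
Qed.

Lemma clopen_sub_of (T C : X -> Prop) : clopen C -> clopen (fun s : subspace T => C (proj1_sig s)).
Proof. intros [Ho Hc]. split; [apply sub_open_of; auto|]. apply (sub_open_of T _ Hc). Qed.

Lemma good_clopen_and T C : clopen T -> good T -> clopen C -> good (fun x => T x /\ C x).
Proof.
  intros HT G HC.
  apply (clopen_emb_A (subspace T) G (subspace (fun x => T x /\ C x))
          (fun s => exist T (proj1_sig s) (proj1 (proj2_sig s)))).
  - apply compact_sub; auto. apply closed_and; [apply HT|apply HC].
  - apply hausdorff_sub; auto.
  - apply embed_sub_sub; auto.
  - apply clopen_ext with (fun t : subspace T => C (proj1_sig t)).
    + apply clopen_sub_of; auto.
    + intros [x Tx]; split.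
      * intros Cx. exists (exist _ x (conj Tx Cx)). apply sig_eq; auto.
      * intros [[y [Ty Cy]] E]. apply (f_equal (@proj1_sig _ _)) in E. simpl in E. subst; auto.
Qed.

Lemma sub_build (W : X -> Prop) (I : Type) (P : I -> X -> Prop) :
  closed W -> (forall i x, P i x -> W x) -> (forall i, open (P i)) -> (forall i, good (P i)) ->
  (forall i j x, P i x -> P j x -> i = j) ->
  (forall x y, W x -> W y -> (forall i, ~ P i x) -> (forall i, ~ P i y) -> x = y) ->
  good W.
Proof.
  intros HW HPW HPo HPg Hd Hc.
  apply (build (subspace W) (compact_sub W HX HW) (hausdorff_sub W HH) I (fun i => subspace (P i)) HPg
           (fun i s => exist W (proj1_sig s) (HPW i _ (proj2_sig s)))).
  - intro i. apply embed_sub_sub; auto.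
  - intro i. apply open_ext with (fun z : subspace W => P i (proj1_sig z)).
    + apply sub_open_of; auto.
    + intros [x Wx]; simpl; split.
      * intros Px. exists (exist _ x Px). apply sig_eq; auto.
      * intros [[y Py] E]. apply (f_equal (@proj1_sig _ _)) in E. simpl in E. subst; auto.
  - intros i j [x Px] [y Py] E. apply (f_equal (@proj1_sig _ _)) in E. simpl in E. subst y.
    assert (i = j) by (apply (Hd i j x); auto). subst j.
    f_equal. apply sig_eq; auto.
  - intros [x Wx] [y Wy] H1 H2. apply sig_eq; simpl. apply Hc; auto.
    + intros i Px. apply (H1 i (exist _ x Px)). apply sig_eq; auto.
    + intros i Py. apply (H2 i (exist _ y Py)). apply sig_eq; auto.
Qed.

Lemma good_empty : good (fun _ => False).
Proof. apply A_empty. intros [x []]. Qed.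

Lemma good_union T1 T2 : clopen T1 -> clopen T2 -> good T1 -> good T2 ->
  good (fun x => T1 x \/ T2 x).
Proof.
  intros C1 C2 G1 G2.
  apply (sub_build _ bool (fun b => if b then T1 else fun x => T2 x /\ ~ T1 x)).
  - apply closed_or; [apply C1|apply C2].
  - intros [|] x H; tauto.
  - intros [|]; [apply C1|]. apply open_diff; [apply C2|apply C1].
  - intros [|]; auto. apply good_clopen_and; auto. apply clopen_compl; auto.
  - intros [|] [|] x H1 H2; tauto.
  - intros x y [H|H] _ H1; exfalso.
    + apply (H1 true); auto.
    + destruct (classic (T1 x)); [apply (H1 true)|apply (H1 false)]; auto.
Qed.

Lemma good_list (A : Type) (l : list A) (G : A -> X -> Prop) :
  (forall a, In a l -> clopen (G a) /\ good (G a)) ->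
  clopen (fun x => exists a, In a l /\ G a x) /\ good (fun x => exists a, In a l /\ G a x).
Proof.
  induction l as [|a l IH]; intros H.
  - split.
    + apply clopen_ext with (fun _ => False).
      * split; [apply open_empty|apply closed_empty].
      * intro x; simpl; firstorder.
    + apply good_ext with (fun _ => False); [apply good_empty|]. intro x; simpl; firstorder.
  - destruct (H a (or_introl eq_refl)) as [Ca Ga].
    destruct IH as [Cl Gl]; [intros; apply H; simpl; auto|].
    assert (E : forall x, (G a x \/ exists b, In b l /\ G b x) <-> exists b, In b (a :: l) /\ G b x).
    { intro x; simpl; split.
      - intros [Hx|[b [Hb Hx]]]; eauto.
      - intros [b [[<-|Hb] Hx]]; eauto. }
    split.
    + apply clopen_ext with (2 := E). apply clopen_or; auto.
    + apply good_ext with (2 := E). apply good_union; auto.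
Qed.

Lemma good_full_classA : good (fun _ => True) -> classA X.
Proof.
  intros G. apply (clopen_emb_A _ G X (fun x => exist (fun _ : X => True) x I)); auto.
  - apply embed_full_sub; auto.
  - apply clopen_ext with (fun _ => True).
    + split; [apply open_full|apply closed_full].
    + intros [x []]; split; auto. intros _. exists x; auto.
Qed.

End Good.

Inductive reachR {J : Type} (R : J -> J -> Prop) (j : J) : J -> nat -> Prop :=
| r0 : reachR R j j 0
| rS : forall k n, reachR R j k n -> reachR R j k (S n)
| rM : forall m k n, reachR R j m n -> R m k -> reachR R j k (S n).

Section Reach.
Context {J : Type} (R : J -> J -> Prop) (Rsym : forall a b, R a b -> R b a)
  (Rfin : forall a, exists l, forall b, R a b -> In b l).

Definition connR := clos_refl_trans J R.

Lemma connR_sym a b : connR a b -> connR b a.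
Proof.
  induction 1.
  - apply rt_step; auto.
  - apply rt_refl.
  - eapply rt_trans; eauto.
Qed.

Lemma connR_trans a b c : connR a b -> connR b c -> connR a c.
Proof. intros; eapply rt_trans; eauto. Qed.

Lemma conn_reach a b : connR a b -> exists n, reachR R a b n.
Proof.
  intros H. apply clos_rt_rtn1 in H. induction H as [|y z Hyz H IH].
  - exists 0; constructor.
  - destruct IH as [n Hn]. exists (S n). eapply rM; eauto.
Qed.

Lemma reach_conn a b n : reachR R a b n -> connR a b.
Proof.
  induction 1.
  - apply rt_refl.
  - auto.
  - eapply rt_trans; eauto. apply rt_step; auto.
Qed.

Lemma reach_mono a b n m : reachR R a b n -> n <= m -> reachR R a b m.
Proof.
  intros H Hle. induction Hle; auto. apply rS; auto.
Qed.

Lemma nbr_list (l : list J) : exists L, forall m k, In m l -> R m k -> In k L.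
Proof.
  induction l as [|a l IH].
  - exists nil. intros m k [].
  - destruct IH as [L HL]. destruct (Rfin a) as [la Hla]. exists (la ++ L).
    intros m k [<-|Hm] Hmk; apply in_or_app; eauto.
Qed.

Lemma reach_fin a n : exists l, forall b, reachR R a b n -> In b l.
Proof.
  induction n as [|n IH].
  - exists [a]. intros b H. inversion H; subst; simpl; auto.
  - destruct IH as [l Hl]. destruct (nbr_list l) as [L HL]. exists (l ++ L).
    intros b H. inversion H; subst; apply in_or_app; eauto.
Qed.

End Reach.

Lemma sig_eq_gen (A : Type) (P : A -> Prop) (a b : sig P) : proj1_sig a = proj1_sig b -> a = b.
Proof. destruct a as [x hx], b as [y hy]; simpl; intros ->. f_equal. apply proof_irrelevance. Qed.

Section Key.
Context {X : space} (HX : compact X) (HH : hausdorff X) (HP : hereditarily_paracompact X).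

Lemma key (W0 : X -> Prop) (p : X) : clopen W0 -> W0 p ->
  (forall y, W0 y -> y <> p -> exists H, clopen H /\ H y /\ good H /\ forall z, H z -> W0 z /\ z <> p) ->
  good W0.
Proof.
  intros HW0 W0p Hgn.
  pose (Y := fun x => W0 x /\ x <> p).
  assert (HYo : open Y).
  { apply open_inter; [apply HW0|]. apply (closed_point p HH). }
  pose (I0 := {H : X -> Prop | clopen H /\ good H /\ forall z, H z -> Y z}).
  destruct (pc_to_PCX X Y (HP Y) I0 (fun t => proj1_sig t)) as [J [V [Vo [Vc [Vr Vl]]]]].
  { intros t. destruct t as [H HP2]. simpl. apply (proj1 (proj1 HP2)). }
  { intros x [W0x nxp]. destruct (Hgn x W0x nxp) as [H [HC [Hx [HG HY]]]].
    exists (exist _ H (conj HC (conj HG HY))); simpl; auto. }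
  pose (V' := fun j x => Y x /\ V j x).
  assert (V'o : forall j, open (V' j)) by (intro j; apply open_inter; auto).
  pose (ch := fun j => proj1_sig (constructive_indefinite_description _ (Vr j))).
  pose (HHf := fun j => proj1_sig (ch j)).
  assert (HHc : forall j, clopen (HHf j)) by (intro j; apply (proj2_sig (ch j))).
  assert (HHg : forall j, good (HHf j)) by (intro j; apply (proj2_sig (ch j))).
  assert (HHY : forall j z, HHf j z -> Y z) by (intro j; apply (proj2_sig (ch j))).
  assert (HVH : forall j x, V' j x -> HHf j x).
  { intros j x [Yx Vx]. exact (proj2_sig (constructive_indefinite_description _ (Vr j)) x Yx Vx). }
  pose (meets := fun j k => exists x, V' j x /\ V' k x).
  assert (Msym : forall a b, meets a b -> meets b a).
  { intros a b [x [H1 H2]]; exists x; auto. }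
  assert (Mfin : forall a, exists l, forall b, meets a b -> In b l).
  { intro a.
    assert (Hc : compact_set (HHf a)) by (apply compact_closed_set; auto; apply HHc).
    destruct (Hc {q : (X -> Prop) * list J | open (fst q) /\
                 forall k, (exists y, Y y /\ fst q y /\ V k y) -> In k (snd q)}
                 (fun q => fst (proj1_sig q))) as [L HL].
    - intros t; destruct t as [q Hq]; simpl; apply Hq.
    - intros x Hx. destruct (Vl x (HHY a x Hx)) as [W [HW [Wx [l Hl]]]].
      exists (exist _ (W, l) (conj HW Hl)); simpl; auto.
    - exists (flat_map (fun q => snd (proj1_sig q)) L).
      intros b [x [Vax Vbx]].
      destruct (HL x (HVH a x Vax)) as [q [Hq Hqx]].
      apply in_flat_map. exists q; split; auto.
      destruct q as [q Hq2]; simpl in *. apply (proj2 Hq2). exists x.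
      destruct Vbx; auto. }

  pose (conn := connR meets).
  pose (reach := reachR meets).
  pose (E := fun b x => exists k, conn b k /\ V' k x).
  assert (Eo : forall b, open (E b)) by (intro b; apply open_Union_cond; auto).
  assert (Ec : forall b, open (fun x => Y x /\ ~ E b x)).
  { intro b. apply open_ext with (fun x => exists k, ~ conn b k /\ V' k x); [apply open_Union_cond; auto|].
    intro x; split.
    - intros [k [nc [Yx Vx]]]. split; auto. intros [k' [ck' Vk'x]]. apply nc.
      apply connR_trans with k'; auto. apply rt_step. exists x; split; auto. split; auto.
    - intros [Yx nE]. destruct (Vc x Yx) as [k Vk]. exists k; split; [|split; auto].
      intro ck; apply nE; exists k; split; auto; split; auto. }
  assert (HEc : forall b k, closed (fun x => HHf k x /\ E b x)).
  { intros b k. apply closed_ext with (fun x => HHf k x /\ ~ (Y x /\ ~ E b x)).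
    - apply closed_diff; [apply HHc|apply Ec].
    - intro x; split.
      + intros [Hk H]. split; auto. apply NNPP; intro nE; apply H; split; eauto.
      + intros [Hk Ex]. split; auto. intros [_ nE]; auto. }
  pose (Qn := fun b n x => exists k, reach b k n /\ HHf k x /\ E b x).
  assert (Qc : forall b n, clopen (Qn b n)).
  { intros b n. destruct (reach_fin meets Mfin b n) as [l Hl]. split.
    - apply open_Union_cond. intros k _. apply open_inter; [apply HHc|apply Eo].
    - apply (closed_fin_union J (fun k => reach b k n) l (fun k x => HHf k x /\ E b x)); auto. }
  pose (piece := fun b n x => Qn b n x /\ match n with 0 => True | S m => ~ Qn b m x end).
  assert (Pc : forall b n, clopen (piece b n)).
  { intros b [|m].
    - apply clopen_ext with (Qn b 0); [apply Qc|]. intro; unfold piece; tauto.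
    - apply clopen_and; [apply Qc|apply clopen_compl, Qc]. }
  assert (PY : forall b n x, piece b n x -> Y x).
  { intros b n x [[k [_ [Hk _]]] _]. eauto. }
  assert (PE : forall b n x, piece b n x -> E b x).
  { intros b n x [[k [_ [_ Ex]]] _]; auto. }
  assert (Pg : forall b n, good (piece b n)).
  { intros b n. destruct (reach_fin meets Mfin b n) as [l Hl].
    destruct (good_list HX HH J l HHf) as [UC UG]; [intros; split; auto|].
    apply good_ext with (fun x => (fun x => exists k, In k l /\ HHf k x) x /\ piece b n x).
    - apply good_clopen_and; auto.
    - intro x; split; [tauto|]. intros Hx; split; auto.
      destruct Hx as [[k [Hk [HHk _]]] _]. exists k; split; auto. }
  assert (Qmono : forall b m n x, m <= n -> Qn b m x -> Qn b n x).
  { intros b m n x Hle [k [Hr Hk]]. exists k; split; auto. apply reach_mono with m; auto. }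
  assert (Pmin : forall b n x, Qn b n x -> exists m, piece b m x).
  { intros b n x. induction n as [|n IH]; intros Hq.
    - exists 0; split; auto.
    - destruct (classic (Qn b n x)) as [Hq'|nq]; auto. exists (S n); split; auto. }
  assert (Puniq : forall b n m x, piece b n x -> piece b m x -> n = m).
  { intros b n m x [Hn Hn'] [Hm Hm'].
    destruct (lt_eq_lt_dec n m) as [[lt|eq]|gt]; auto; exfalso.
    - destruct m as [|m]; [lia|]. apply Hm'. apply Qmono with n; auto; lia.
    - destruct n as [|n]; [lia|]. apply Hn'. apply Qmono with m; auto; lia. }
  pose (base := fun j => epsilon (inhabits j) (fun b => conn j b)).
  assert (Hbase : forall j, conn j (base j)).
  { intro j. apply (epsilon_spec (inhabits j) (fun b => conn j b)). exists j. apply rt_refl. }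
  assert (Hbase_eq : forall j k, conn j k -> base j = base k).
  { intros j k Hjk. unfold base.
    assert (E1 : (fun b => conn j b) = (fun b => conn k b)).
    { apply functional_extensionality; intro b; apply propositional_extensionality; split; intro H.
      - apply connR_trans with j; auto. apply connR_sym; auto.
      - apply connR_trans with k; auto. }
    rewrite E1. f_equal. apply proof_irrelevance. }
  assert (Esame : forall j k x, E (base j) x -> E (base k) x -> base j = base k).
  { intros j k x [k1 [c1 V1]] [k2 [c2 V2]]. apply Hbase_eq.
    exact (connR_trans _ _ _ _ (Hbase j) (connR_trans _ _ _ _ c1
      (connR_trans _ _ _ _ (rt_step _ _ _ _ (ex_intro _ x (conj V1 V2)))
        (connR_trans _ _ _ _ (connR_sym _ Msym _ _ c2) (connR_sym _ Msym _ _ (Hbase k)))))). }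
  pose (Ip := {P : X -> Prop | exists j n, P = piece (base j) n}).
  apply (sub_build HX HH W0 Ip (fun i => proj1_sig i)).
  - apply HW0.
  - intros [P [j [n ->]]] x Hx; simpl in *. apply (PY _ _ _ Hx).
  - intros [P [j [n ->]]]; simpl. apply Pc.
  - intros [P [j [n ->]]]; simpl. apply Pg.
  - intros [P1 [j1 [n1 E1]]] [P2 [j2 [n2 E2]]] x H1 H2; simpl in *.
    subst P1 P2. assert (Hb : base j1 = base j2) by (apply Esame with x; eapply PE; eauto).
    rewrite Hb in H1. assert (n1 = n2) by (apply Puniq with (base j2) x; auto). subst n2.
    apply sig_eq_gen; simpl. rewrite Hb; auto.
  - assert (Hp : forall z, W0 z -> (forall i : Ip, ~ proj1_sig i z) -> z = p).
    { intros z W0z Hn. apply NNPP; intro nzp. destruct (Vc z (conj W0z nzp)) as [k Vk].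
      assert (V'k : V' k z) by (split; [split|]; auto).
      assert (ck : conn (base k) k) by exact (connR_sym _ Msym _ _ (Hbase k)).
      destruct (conn_reach meets _ _ ck) as [n Hr].
      destruct (Pmin (base k) n z) as [m Hm].
      { exists k; split; auto; split; auto. exists k; split; auto. }
      apply (Hn (exist _ (piece (base k) m) (ex_intro _ k (ex_intro _ m eq_refl)))); simpl; auto. }
    intros x y W0x W0y Hx Hy. rewrite (Hp x), (Hp y); auto.
Qed.

End Key.

Lemma backward (X : space) (HX : compact X) (HH : hausdorff X) (HS : scattered X)
  (HP : hereditarily_paracompact X) : classA X.
Proof.
  assert (Hall : forall x : X, exists T : X -> Prop, clopen T /\ T x /\ good T).
  { apply NNPP. intro H. apply not_all_ex_not in H. destruct H as [x0 Hx0].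
    destruct (HS (fun x => ~ exists T, clopen T /\ T x /\ good T) (ex_intro _ x0 Hx0))
      as [p [Cp [O [HO [Op Hiso]]]]].
    destruct (zero_dim HX HH HS p O HO Op) as [W0 [HW0 [W0p HW0O]]].
    apply Cp. exists W0; split; [auto|split; auto].
    apply (key HX HH HP W0 p HW0 W0p).
    intros y W0y nyp.
    assert (Gy : exists T : X -> Prop, clopen T /\ T y /\ good T).
    { apply NNPP; intro nG. apply nyp. apply Hiso; auto. }
    destruct Gy as [T [HT [Ty GT]]].
    destruct (sep_clopen HX HH HS y p nyp) as [C [HC [Cy nCp]]].
    exists (fun z => T z /\ (C z /\ W0 z)).
    split; [apply clopen_and; auto; apply clopen_and; auto|]. split; [auto|]. split.
    - apply good_clopen_and; auto. apply clopen_and; auto.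
    - intros z [_ [Cz W0z]]. split; auto; intro; subst; auto. }
  destruct (HX {T : X -> Prop | clopen T /\ good T} (fun t => proj1_sig t)) as [l Hl].
  - intros t; destruct t as [T HT]; simpl. apply (proj1 (proj1 HT)).
  - intro x. destruct (Hall x) as [T [HT [Tx GT]]]. exists (exist _ T (conj HT GT)); auto.
  - destruct (good_list HX HH _ l (fun t => proj1_sig t)) as [_ G].
    { intros t _; destruct t as [T HT]; simpl; auto. }
    apply (good_full_classA HX HH). apply good_ext with (1 := G).
    intro x; split; auto; intros _; apply Hl.
Qed.

Theorem lemma3 (X : space) (Hc : compact X) (Hh : hausdorff X) :
  classA X <-> scattered X /\ hereditarily_paracompact X.
Proof.
  split.
  - apply forward_main.
  - intros [Hs Hp]. apply backward; auto.
Qed.
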